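(* Let $F$ be WORDER or WMAJORITY with weights $w_1\ge\dots\ge w_n>0$. The Pareto front of MO-$F$ consists of exactly $n+1$ objective vectors, namely $\bigl(\sum_{k=1}^{j}w_k,\;c_j\bigr)$ for $j=0,1,\dots,n$, where $c_0=0$ and $c_j=2j-1$ for $j\ge1$; the empty tree and, for each $1\le i\le n$, any tree whose leaves are exactly $x_1,\dots,x_i$ (each once) are Pareto optimal.
   Context: Fix an integer $n\ge 1$ and real weights $w_1\ge w_2\ge\dots\ge w_n>0$. The terminal set is $T=\{x_1,\bar x_1,\dots,x_n,\bar x_n\}$ ($\bar x_i$ is the complement of $x_i$; $x_i$ is called positive). A syntax tree is either the empty tree or a rooted ordered binary tree whose inner nodes are all labelled by the binary function $J$ (join, exactly two ordered children) and whose leaves are labelled by elements of $T$. The complexity $C(X)$ is the number of nodes of $X$ (0 for the empty tree). The leaf list $l$ of $X$ is the sequence of leaf labels in an inorder traversal. WORDER: build a list $S$ by scanning $l$ from front to rear and appending a literal only if neither it nor its complement is already in $S$; WORDER$(X)=\sum_{i:\,x_i\in S} w_i$. WMAJORITY: WMAJORITY$(X)=\sum w_i$ over all $i$ such that $x_i$ occurs in $l$ at least once and at least as often as $\bar x_i$. MO-$F(X)=(F(X),C(X))$, $F$ maximized and $C$ minimized. $Y$ dominates $X$ iff $F(Y)\ge F(X)$, $C(Y)\le C(X)$ and at least one inequality is strict. A tree is Pareto optimal if no syntax tree dominates it; the Pareto front is the set of objective vectors of Pareto optimal trees. *)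

(* Defs.v *)
(* real weights, lists. Variables are 0-indexed: x_{i+1} of the
   paper is [Pos i], for i < n; weight w_{i+1} of the paper is [w i]. *)
From Stdlib Require Import Reals List Arith Bool Permutation.
Import ListNotations.
Open Scope R_scope.

Inductive lit : Type := Pos (i : nat) | Neg (i : nat).

Definition lit_idx (l : lit) : nat := match l with Pos i => i | Neg i => i end.
Definition compl (l : lit) : lit := match l with Pos i => Neg i | Neg i => Pos i end.

Definition lit_eqb (a b : lit) : bool :=
  match a, b with
  | Pos i, Pos j => Nat.eqb i j
  | Neg i, Neg j => Nat.eqb i j
  | _, _ => false
  end.

Definition memb (l : lit) (s : list lit) : bool := existsb (lit_eqb l) s.
Definition countl (l : lit) (s : list lit) : nat := length (filter (lit_eqb l) s).

Inductive ntree : Type :=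
  | Leaf (l : lit)
  | J (a b : ntree).

Definition tree := option ntree.
Definition empty_tree : tree := None.

Fixpoint nsize (t : ntree) : nat :=
  match t with Leaf _ => 1 | J a b => S (nsize a + nsize b) end.
Definition complexity (X : tree) : nat :=
  match X with None => 0 | Some t => nsize t end.

Fixpoint nleaves (t : ntree) : list lit :=
  match t with Leaf l => [l] | J a b => nleaves a ++ nleaves b end.
Definition leaves (X : tree) : list lit :=
  match X with None => [] | Some t => nleaves t end.

(* X is a syntax tree over the terminal set T = {x_i, \bar x_i | i < n} *)
Definition wf_tree (n : nat) (X : tree) : Prop :=
  Forall (fun l => (lit_idx l < n)%nat) (leaves X).

Fixpoint worder_scan (S : list lit) (l : list lit) : list lit :=
  match l with
  | [] => S
  | a :: r =>
      if memb a S || memb (compl a) S then worder_scan S r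
      else worder_scan (S ++ [a]) r
  end.

Fixpoint sumR (n : nat) (f : nat -> R) : R :=
  match n with O => 0 | S m => sumR m f + f m end.

Definition WORDER (n : nat) (w : nat -> R) (X : tree) : R :=
  let S := worder_scan [] (leaves X) in
  sumR n (fun i => if memb (Pos i) S then w i else 0).

Definition WMAJORITY (n : nat) (w : nat -> R) (X : tree) : R :=
  let l := leaves X in
  sumR n (fun i => if (1 <=? countl (Pos i) l)%nat && (countl (Neg i) l <=? countl (Pos i) l)%nat
                   then w i else 0).

Inductive problem : Type := PWORDER | PWMAJORITY.

Definition fitness (F : problem) (n : nat) (w : nat -> R) (X : tree) : R :=
  match F with PWORDER => WORDER n w X | PWMAJORITY => WMAJORITY n w X end.

Definition dominates (F : problem) (n : nat) (w : nat -> R) (Y X : tree) : Prop :=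
  fitness F n w Y >= fitness F n w X /\ (complexity Y <= complexity X)%nat /\
  (fitness F n w Y > fitness F n w X \/ (complexity Y < complexity X)%nat).

Definition pareto_optimal (F : problem) (n : nat) (w : nat -> R) (X : tree) : Prop :=
  wf_tree n X /\ ~ (exists Y, wf_tree n Y /\ dominates F n w Y X).

Definition in_pareto_front (F : problem) (n : nat) (w : nat -> R) (v : R * nat) : Prop :=
  exists X, pareto_optimal F n w X /\ v = (fitness F n w X, complexity X).

Definition cj (j : nat) : nat := match j with O => O | S _ => (2 * j - 1)%nat end.

Definition front_list (n : nat) (w : nat -> R) : list (R * nat) :=
  map (fun j => (sumR j w, cj j)) (seq 0 (S n)).

Definition first_pos (i : nat) : list lit := map Pos (seq 0 i).

(* Main.v *)
Require Import Defs.
From Stdlib Require Import Reals List Arith Permutation.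
Import ListNotations.
Open Scope R_scope.
From Stdlib Require Import Lia Lra.

Lemma lit_eqb_eq : forall a b, lit_eqb a b = true <-> a = b.
Proof.
  intros [i|i] [j|j]; simpl; split; intro H; try discriminate;
  try (apply Nat.eqb_eq in H; subst; reflexivity);
  try (inversion H; subst; apply Nat.eqb_refl).
Qed.

Lemma memb_In : forall l s, memb l s = true <-> In l s.
Proof.
  intros l s; unfold memb; rewrite existsb_exists; split.
  - intros [x [Hx E]]. apply lit_eqb_eq in E; subst; exact Hx.
  - intros H; exists l; split; [exact H| apply lit_eqb_eq; reflexivity].
Qed.

Lemma memb_false : forall l s, ~ In l s -> memb l s = false.
Proof.
  intros l s H. destruct (memb l s) eqn:E; [|reflexivity].
  apply memb_In in E; contradiction.
Qed.

Lemma countl_In : forall a l, (1 <= countl a l)%nat -> In a l.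
Proof.
  intros a l H. unfold countl in H.
  destruct (filter (lit_eqb a) l) as [|x r] eqn:E; simpl in H; [lia|].
  assert (Hx : In x (filter (lit_eqb a) l)) by (rewrite E; left; reflexivity).
  apply filter_In in Hx. destruct Hx as [Hx Ex]. apply lit_eqb_eq in Ex; subst; exact Hx.
Qed.

Lemma countl_perm : forall a l l', Permutation l l' -> countl a l = countl a l'.
Proof.
  intros a l l' P. unfold countl. induction P; simpl.
  - reflexivity.
  - destruct (lit_eqb a x); simpl; auto.
  - destruct (lit_eqb a x); destruct (lit_eqb a y); simpl; auto.
  - congruence.
Qed.

Lemma countl_app : forall a l l', countl a (l ++ l') = (countl a l + countl a l')%nat.
Proof. intros. unfold countl. rewrite filter_app, length_app. reflexivity. Qed.

Definition first_pos_S i : first_pos (S i) = first_pos i ++ [Pos i].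
Proof. unfold first_pos. rewrite seq_S, map_app. reflexivity. Qed.

Lemma countl_pos_first : forall m i, countl (Pos m) (first_pos i) = if (m <? i)%nat then 1%nat else 0%nat.
Proof.
  intros m i. induction i.
  - reflexivity.
  - rewrite first_pos_S, countl_app, IHi. unfold countl; simpl.
    destruct (Nat.ltb_spec m i); destruct (Nat.ltb_spec m (S i));
    destruct (Nat.eqb_spec m i); simpl; lia.
Qed.

Lemma countl_neg_first : forall m i, countl (Neg m) (first_pos i) = 0%nat.
Proof.
  intros m i. induction i.
  - reflexivity.
  - rewrite first_pos_S, countl_app, IHi. reflexivity.
Qed.

Lemma worder_scan_In : forall l S x, In x (worder_scan S l) -> In x S \/ In x l.
Proof.
  induction l as [|a r IH]; intros S x H; simpl in H.
  - left; exact H.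
  - destruct (orb (memb a S) (memb (compl a) S)).
    + destruct (IH _ _ H) as [H1|H1]; auto. right; right; auto.
    + destruct (IH _ _ H) as [H1|H1].
      * apply in_app_or in H1. destruct H1 as [H1|[H1|[]]]; auto. right; left; auto.
      * right; right; auto.
Qed.

Lemma worder_scan_len : forall l S, (length (worder_scan S l) <= length S + length l)%nat.
Proof.
  induction l as [|a r IH]; intros S; simpl.
  - lia.
  - destruct (orb (memb a S) (memb (compl a) S)).
    + specialize (IH S); lia.
    + specialize (IH (S ++ [a])); rewrite length_app in IH; simpl in IH; lia.
Qed.

Lemma worder_scan_pos : forall l S, (forall x, In x (S ++ l) -> exists j, x = Pos j) ->
  NoDup (S ++ l) -> worder_scan S l = S ++ l.
Proof.
  induction l as [|a r IH]; intros S Hp Hn; simpl.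
  - rewrite app_nil_r; reflexivity.
  - assert (Ha : ~ In a S).
    { intro H. apply (NoDup_remove_2 S r a Hn). apply in_or_app; left; exact H. }
    destruct (Hp a (in_or_app S (a :: r) a (or_intror (or_introl eq_refl)))) as [j Hj].
    assert (Hc : ~ In (compl a) S).
    { intro H. subst a. simpl in H.
      destruct (Hp (Neg j) (in_or_app _ _ _ (or_introl H))) as [k Hk]; discriminate. }
    rewrite (memb_false _ _ Ha), (memb_false _ _ Hc). simpl.
    replace (S ++ a :: r) with ((S ++ [a]) ++ r) by (rewrite <- app_assoc; reflexivity).
    apply IH; rewrite <- app_assoc; simpl; assumption.
Qed.

Lemma sumR_ext : forall n f g, (forall m, (m < n)%nat -> f m = g m) -> sumR n f = sumR n g.
Proof.
  induction n; intros f g H; simpl; [reflexivity|].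
  rewrite (IHn f g) by (intros; apply H; lia). rewrite H by lia. reflexivity.
Qed.

Lemma sumR_ltb : forall (w : nat -> R) n i,
  sumR n (fun m => if (m <? i)%nat then w m else 0) = sumR (Nat.min n i) w.
Proof.
  intros w n i. induction n.
  - reflexivity.
  - cbn [sumR]. rewrite IHn. destruct (Nat.ltb_spec n i).
    + rewrite (Nat.min_l (S n) i) by lia. rewrite Nat.min_l by lia. simpl. reflexivity.
    + rewrite (Nat.min_r (S n) i) by lia. rewrite Nat.min_r by lia. lra.
Qed.

Lemma sumR_mono : forall (w : nat -> R) n a b, (forall i, (i < n)%nat -> 0 <= w i) ->
  (a <= b)%nat -> (b <= n)%nat -> sumR a w <= sumR b w.
Proof.
  intros w n a b Hw Hab Hbn. induction b.
  - assert (a = 0%nat) by lia; subst; lra.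
  - destruct (Nat.eq_dec a (S b)) as [E|E]; [subst; lra|].
    simpl. assert (0 <= w b) by (apply Hw; lia).
    assert (sumR a w <= sumR b w) by (apply IHb; lia). lra.
Qed.

Lemma sumR_strict : forall (w : nat -> R) n a b, (forall i, (i < n)%nat -> 0 < w i) ->
  (a < b)%nat -> (b <= n)%nat -> sumR a w < sumR b w.
Proof.
  intros w n a b Hw Hab Hbn. destruct b; [lia|]. simpl.
  assert (0 < w b) by (apply Hw; lia).
  assert (sumR a w <= sumR b w).
  { apply (sumR_mono w n); try lia. intros; left; apply Hw; lia. }
  lra.
Qed.

Lemma sum_sel_le : forall (w : nat -> R) n (P : nat -> bool),
  (forall i, (i < n)%nat -> 0 <= w i) ->
  (forall i j, (i <= j)%nat -> (j < n)%nat -> w j <= w i) ->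
  sumR n (fun i => if P i then w i else 0) <= sumR (length (filter P (seq 0 n))) w.
Proof.
  intros w n P. induction n; intros Hw Hm; [simpl; lra|].
  cbn [sumR]. rewrite seq_S, filter_app, length_app. simpl.
  assert (IH := IHn (fun i H => Hw i ltac:(lia)) (fun i j H1 H2 => Hm i j H1 ltac:(lia))).
  assert (Hc := filter_length_le P (seq 0 n)). rewrite length_seq in Hc.
  destruct (P n); simpl.
  - rewrite Nat.add_1_r. simpl.
    assert (w n <= w (length (filter P (seq 0 n)))) by (apply Hm; lia). lra.
  - rewrite Nat.add_0_r. lra.
Qed.

Lemma count_bound : forall (P : nat -> bool) L n,
  (forall i, P i = true -> In (Pos i) L) -> (length (filter P (seq 0 n)) <= length L)%nat.
Proof.
  intros P L n H.
  rewrite <- (length_map Pos).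
  apply NoDup_incl_length.
  - apply FinFun.Injective_map_NoDup.
    + intros a b E; inversion E; reflexivity.
    + apply NoDup_filter, seq_NoDup.
  - intros x Hx. apply in_map_iff in Hx. destruct Hx as [i [E Hi]]. subst.
    apply filter_In in Hi. apply H, Hi.
Qed.

Lemma sel_bound : forall (w : nat -> R) n (P : nat -> bool) L k,
  (forall i, (i < n)%nat -> 0 <= w i) ->
  (forall i j, (i <= j)%nat -> (j < n)%nat -> w j <= w i) ->
  (forall i, P i = true -> In (Pos i) L) -> (length L <= k)%nat ->
  sumR n (fun i => if P i then w i else 0) <= sumR (Nat.min k n) w.
Proof.
  intros w n P L k Hw Hm HP Hk.
  eapply Rle_trans; [apply sum_sel_le; assumption|].
  apply (sumR_mono w n); auto; [|lia].
  assert (H1 := count_bound P L n HP).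
  assert (Hc := filter_length_le P (seq 0 n)). rewrite length_seq in Hc. lia.
Qed.

Lemma fit_ub : forall F n (w : nat -> R) X,
  (forall i, (i < n)%nat -> 0 <= w i) ->
  (forall i j, (i <= j)%nat -> (j < n)%nat -> w j <= w i) ->
  fitness F n w X <= sumR (Nat.min (length (leaves X)) n) w.
Proof.
  intros F n w X Hw Hm. destruct F; simpl.
  - unfold WORDER.
    apply (sel_bound w n _ (worder_scan [] (leaves X))); auto.
    + intros i Hi. apply memb_In in Hi. exact Hi.
    + assert (H := worder_scan_len (leaves X) []). simpl in H. exact H.
  - unfold WMAJORITY.
    apply (sel_bound w n _ (leaves X)); auto.
    intros i Hi. apply Bool.andb_true_iff in Hi. destruct Hi as [Hi _].
    apply Nat.leb_le in Hi. apply countl_In, Hi.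
Qed.

Lemma first_pos_In : forall x i, In x (first_pos i) <-> exists j, x = Pos j /\ (j < i)%nat.
Proof.
  intros x i. unfold first_pos. rewrite in_map_iff. split.
  - intros [j [E Hj]]. apply in_seq in Hj. exists j; split; [auto|lia].
  - intros [j [E Hj]]. exists j; split; [auto|]. apply in_seq; lia.
Qed.

Lemma fit_perm : forall F n (w : nat -> R) X i, (i <= n)%nat ->
  Permutation (leaves X) (first_pos i) -> fitness F n w X = sumR i w.
Proof.
  intros F n w X i Hi HP.
  replace (sumR i w) with (sumR (Nat.min n i) w) by (rewrite Nat.min_r; auto). rewrite <- sumR_ltb.
  destruct F; simpl.
  - unfold WORDER. apply sumR_ext. intros m Hm.
    rewrite worder_scan_pos; simpl.
    + destruct (memb (Pos m) (leaves X)) eqn:E; destruct (Nat.ltb_spec m i); auto.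
      * apply memb_In in E. apply (Permutation_in _ HP) in E.
        apply first_pos_In in E. destruct E as [j [Ej Hj]]. assert (m = j) by congruence; lia.
      * exfalso. assert (H' : In (Pos m) (leaves X)).
        { apply (Permutation_in _ (Permutation_sym HP)). apply first_pos_In. exists m; auto. }
        apply memb_In in H'. congruence.
    + intros x Hx. apply (Permutation_in _ HP) in Hx. apply first_pos_In in Hx.
      destruct Hx as [j [Ej _]]; exists j; auto.
    + apply (Permutation_NoDup (Permutation_sym HP)).
      apply FinFun.Injective_map_NoDup; [intros a b E; inversion E; auto| apply seq_NoDup].
  - unfold WMAJORITY. apply sumR_ext. intros m Hm.
    rewrite (countl_perm _ _ _ HP), (countl_perm (Neg m) _ _ HP).
    rewrite countl_pos_first, countl_neg_first.
    destruct (Nat.ltb_spec m i); reflexivity.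
Qed.

Lemma nsize_len : forall t, nsize t = (2 * length (nleaves t) - 1)%nat /\ (1 <= length (nleaves t))%nat.
Proof.
  induction t; simpl.
  - split; lia.
  - rewrite length_app. destruct IHt1, IHt2. split; lia.
Qed.

Lemma compl_cj : forall X, complexity X = cj (length (leaves X)).
Proof.
  intros [t|]; simpl; [|reflexivity].
  destruct (nsize_len t) as [H1 H2].
  destruct (length (nleaves t)) eqn:E; [lia|]. unfold cj. exact H1.
Qed.

Lemma cj_le : forall a b, (cj a <= cj b)%nat -> (a <= b)%nat.
Proof. intros [|a] [|b]; unfold cj; lia. Qed.
Lemma cj_lt : forall a b, (cj a < cj b)%nat -> (a < b)%nat.
Proof. intros [|a] [|b]; unfold cj; lia. Qed.
Lemma cj_mono : forall a b, (a <= b)%nat -> (cj a <= cj b)%nat.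
Proof. intros [|a] [|b]; unfold cj; lia. Qed.
Lemma cj_smono : forall a b, (a < b)%nat -> (cj a < cj b)%nat.
Proof. intros [|a] [|b]; unfold cj; lia. Qed.

Fixpoint comb (k : nat) : ntree :=
  match k with O => Leaf (Pos 0) | S k' => J (comb k') (Leaf (Pos (S k'))) end.
Definition canon (j : nat) : tree := match j with O => None | S k => Some (comb k) end.

Lemma canon_leaves : forall j, leaves (canon j) = first_pos j.
Proof.
  intros [|k]; [reflexivity|]. simpl. induction k; [reflexivity|].
  simpl. rewrite IHk. rewrite (first_pos_S (S k)). reflexivity.
Qed.

Lemma length_first_pos : forall i, length (first_pos i) = i.
Proof. intros; unfold first_pos; rewrite length_map, length_seq; reflexivity. Qed.

Lemma po_perm : forall F n (w : nat -> R) X i,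
  (forall i, (i < n)%nat -> 0 < w i) ->
  (forall i j, (i <= j)%nat -> (j < n)%nat -> w j <= w i) ->
  (i <= n)%nat -> Permutation (leaves X) (first_pos i) -> pareto_optimal F n w X.
Proof.
  intros F n w X i Hw Hm Hi HP. split.
  - unfold wf_tree. apply Forall_forall. intros x Hx.
    apply (Permutation_in _ HP) in Hx. apply first_pos_In in Hx.
    destruct Hx as [j [E Hj]]; subst; simpl; lia.
  - intros [Y [wfY [H1 [H2 H3]]]].
    rewrite (fit_perm F n w X i Hi HP) in *.
    rewrite !compl_cj in *. rewrite (Permutation_length HP), length_first_pos in *.
    assert (Hw' : forall i, (i < n)%nat -> 0 <= w i) by (intros; left; auto).
    assert (Hub := fit_ub F n w Y Hw' Hm).
    apply cj_le in H2. rewrite Nat.min_l in Hub by lia.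
    assert (sumR (length (leaves Y)) w <= sumR i w) by (apply (sumR_mono w n); auto).
    destruct H3 as [H3|H3].
    + lra.
    + apply cj_lt in H3.
      assert (sumR (length (leaves Y)) w < sumR i w) by (apply (sumR_strict w n); auto).
      lra.
Qed.

Theorem mainTheorem8 (F : problem) (n : nat) (w : nat -> R)
  (hn : (1 <= n)%nat)
  (hpos : forall i, (i < n)%nat -> 0 < w i)
  (hmono : forall i j, (i <= j)%nat -> (j < n)%nat -> w j <= w i) :
  (forall v : R * nat, in_pareto_front F n w v <-> In v (front_list n w))
  /\ NoDup (front_list n w)
  /\ pareto_optimal F n w empty_tree
  /\ (forall (i : nat) (X : tree), (1 <= i <= n)%nat ->
        Permutation (leaves X) (first_pos i) -> pareto_optimal F n w X).
Proof.
  assert (Hw' : forall i, (i < n)%nat -> 0 <= w i) by (intros; left; auto).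
  assert (Hcan : forall j, (j <= n)%nat -> pareto_optimal F n w (canon j)
            /\ fitness F n w (canon j) = sumR j w /\ complexity (canon j) = cj j).
  { intros j Hj. rewrite compl_cj, canon_leaves, length_first_pos.
    split; [apply (po_perm F n w _ j); auto; rewrite canon_leaves; apply Permutation_refl|].
    split; [apply fit_perm; auto; rewrite canon_leaves; apply Permutation_refl|reflexivity]. }
  split; [|split; [|split]].
  - intros v. split.
    + intros [X [[wfX ND] Ev]].
      set (k := length (leaves X)). set (m := Nat.min k n).
      destruct (Hcan m ltac:(unfold m; lia)) as [[wfZ _] [FZ CZ]].
      assert (Hub := fit_ub F n w X Hw' hmono). fold k m in Hub.
      assert (Hc : (complexity (canon m) <= complexity X)%nat).
      { rewrite CZ, compl_cj. apply cj_mono. unfold m, k; lia. }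
      assert (Ef : fitness F n w X = sumR m w).
      { destruct (Rlt_le_dec (fitness F n w X) (sumR m w)) as [L|L]; [|lra].
        exfalso; apply ND. exists (canon m). split; auto. unfold dominates.
        rewrite FZ. split; [lra|split; auto]. }
      assert (Ec : complexity X = cj m).
      { destruct (Nat.eq_dec (complexity X) (cj m)) as [E|E]; auto.
        exfalso; apply ND. exists (canon m). split; auto. unfold dominates.
        rewrite FZ, <- Ef. split; [lra|split; auto]. right. lia. }
      subst v. rewrite Ef, Ec. unfold front_list. apply in_map_iff.
      exists m; split; auto. apply in_seq. unfold m; lia.
    + intros Hv. unfold front_list in Hv. apply in_map_iff in Hv.
      destruct Hv as [j [Ev Hj]]. apply in_seq in Hj.
      destruct (Hcan j ltac:(lia)) as [P [FZ CZ]].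
      exists (canon j). split; auto. rewrite FZ, CZ. auto.
  - unfold front_list. apply FinFun.Injective_map_NoDup; [|apply seq_NoDup].
    intros a b E. inversion E.
    destruct (Nat.lt_trichotomy a b) as [L|[L|L]]; auto;
    apply cj_smono in L; lia.
  - apply (po_perm F n w _ 0); auto; try lia; apply Permutation_refl.
  - intros i X Hi HP. apply (po_perm F n w X i); auto; lia.
Qed.
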